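(* Let $\mathcal G$ be a shortest-path game in which $\mathrm{Val}^{\mathrm d}(v)\neq+\infty$ and $\overline{\mathrm{Val}}^{\mathrm m}(v)\neq+\infty$ for all vertices $v$, and let $\rho$ be a memoryless strategy of Min such that $\mathbb P^{\rho,\tau}_v(\Diamond T)=1$ for every vertex $v$ and every memoryless strategy $\tau$ of Max. Let $\widetilde{\mathcal G}$ be the game graph defined below. Then (i) for every vertex $v$, every finite path in $\widetilde{\mathcal G}$ from $v$ ending in $T$ (at its first visit to $T$) has total weight at most $\mathrm{Val}^{\mathrm m,\rho}(v)$; and (ii) every cycle in $\widetilde{\mathcal G}$ has non-positive total weight.
   Context: A shortest-path game is $\mathcal G=(V_{\mathrm{Max}},V_{\mathrm{Min}},T,E,w)$ with finite $V=V_{\mathrm{Max}}\uplus V_{\mathrm{Min}}\uplus T$, edges $E\subseteq (V\setminus T)\times V$ with every non-target vertex having a successor, and integer weights $w\colon E\to\mathbb Z$. Plays from $v$ are finite paths ending at their first visit to $T$ (total payoff $\mathrm{TP}$ = sum of weights) or infinite paths avoiding $T$ ($\mathrm{TP}=+\infty$). Strategies of Min (resp. Max) map finite paths ending in $V_{\mathrm{Min}}$ (resp. $V_{\mathrm{Max}}$) to distributions on successors of the last vertex; deterministic = always Dirac, memoryless = depends only on the last vertex. $\mathrm{Val}^{\mathrm d}(v)=\inf_\sigma\sup_\tau\mathrm{TP}(\text{unique play from } v \text{ conforming to } \sigma,\tau)$ over deterministic strategies. For memoryless $\rho,\tau$, $\mathbb P^{\rho,\tau}_v,\mathbb E^{\rho,\tau}_v$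 refer to the induced Markov chain; $\mathrm{Val}^{\mathrm m,\rho}(v)=\sup_\tau\mathbb E^{\rho,\tau}_v(\mathrm{TP})$ over memoryless $\tau$, $\overline{\mathrm{Val}}^{\mathrm m}(v)=\inf_\rho\mathrm{Val}^{\mathrm m,\rho}(v)$. For $v\in V_{\mathrm{Min}}$ let $\widetilde E(v)=\arg\min_{v'\in\mathrm{supp}(\rho(v))}\big[w(v,v')+\mathrm{Val}^{\mathrm m,\rho}(v')\big]$, and let $\widetilde{\mathcal G}$ be obtained from $\mathcal G$ by removing every edge $(v,v')$ with $v\in V_{\mathrm{Min}}$ and $v'\notin\widetilde E(v)$. *)

(* Defs.v *)
From HB Require Import structures.
From mathcomp Require Import all_boot all_order all_algebra.
From mathcomp Require Import all_classical all_reals.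
From mathcomp Require Import ereal topology normedtype sequences esum.
From mathcomp Require Import Rstruct.
Set Implicit Arguments. Unset Strict Implicit. Unset Printing Implicit Defensive.
Import Order.TTheory GRing.Theory Num.Theory.
Local Open Scope classical_set_scope.
Local Open Scope ring_scope.

Notation RR := Rdefinitions.R.

Record game (V : finType) := Game {
  VMax : {set V};
  VMin : {set V};
  Tgt  : {set V};
  E    : rel V;
  w    : V -> V -> int }.

Definition wf_game (V : finType) (G : game V) : Prop :=
  [/\ (VMax G :&: VMin G = finset.set0)%SET, (VMax G :&: Tgt G = finset.set0)%SET,
      (VMin G :&: Tgt G = finset.set0)%SET & (VMax G :|: VMin G :|: Tgt G = [set: V])%SET] /\
  (forall u u', E G u u' -> u \notin Tgt G) /\
  (forall u, u \notin Tgt G -> exists u', E G u u').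

Fixpoint path_weight (V : finType) (G : game V) (x : V) (s : seq V) : int :=
  if s is y :: s' then (w G x y + path_weight G y s')%R else 0%R.

Definition first_visit_end (V : finType) (G : game V) (x : V) (s : seq V) : bool :=
  (last x s \in Tgt G) && all (fun y => y \notin Tgt G) (belast x s).

Definition det_strategy (V : finType) (G : game V) (Own : {set V})
    (sg : seq V -> V) : Prop :=
  forall x s, last x s \in Own -> E G (last x s) (sg (x :: s)).

Fixpoint det_prefix (V : finType) (G : game V) (sg tau : seq V -> V) (v : V)
    (n : nat) : seq V :=
  if n is n'.+1 then
    let h := det_prefix G sg tau v n' in
    let u := last v h in
    if u \in Tgt G then h
    else rcons h (if u \in VMin G then sg h else tau h)
  else [:: v].

Definition det_play (V : finType) (G : game V) (sg tau : seq V -> V) (v : V)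
    (n : nat) : V := last v (det_prefix G sg tau v n).

Definition first_hit (V : finType) (G : game V) (p : nat -> V) : nat :=
  xget 0%N [set n | p n \in Tgt G /\ forall m, (m < n)%N -> p m \notin Tgt G].

Definition TP_seq (V : finType) (G : game V) (p : nat -> V) : \bar RR :=
  if asbool (exists n, p n \in Tgt G) then
    ((\sum_(i < first_hit G p) w G (p i) (p i.+1))%:~R)%:E
  else +oo%E.

Definition Val_d (V : finType) (G : game V) (v : V) : \bar RR :=
  ereal_inf [set ereal_sup [set TP_seq G (det_play G sg tau v)
                           | tau in [set tau | det_strategy G (VMax G) tau]]
            | sg in [set sg | det_strategy G (VMin G) sg]].

Definition ml_strategy (V : finType) (G : game V) (Own : {set V})
    (rho : V -> V -> RR) : Prop :=
  forall u, u \in Own ->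
    [/\ (forall u', 0 <= rho u u'), \sum_(u' : V) rho u u' = 1 &
        (forall u', rho u u' != 0 -> E G u u')].

Definition trans (V : finType) (G : game V) (rho tau : V -> V -> RR) (u u' : V) : RR :=
  if u \in VMin G then rho u u' else if u \in VMax G then tau u u' else 0.

Fixpoint path_prob (V : finType) (G : game V) (rho tau : V -> V -> RR)
    (x : V) (s : seq V) : RR :=
  if s is y :: s' then trans G rho tau x y * path_prob G rho tau y s' else 1.

(* P^{rho,tau}_v(<> T): sum of the probabilities of the finite paths from v
   ending at their first visit to T *)
Definition reach_prob (V : finType) (G : game V) (rho tau : V -> V -> RR) (v : V)
    : \bar RR :=
  \esum_(s in [set s | first_visit_end G v s]) (path_prob G rho tau v s)%:E.

(* E^{rho,tau}_v(TP): +oo if T is not reached almost surely, otherwise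
   E(TP^+) - E(TP^-) computed over the (countably many) terminating paths *)
Definition exp_TP (V : finType) (G : game V) (rho tau : V -> V -> RR) (v : V)
    : \bar RR :=
  if reach_prob G rho tau v == 1%E then
    (\esum_(s in [set s | first_visit_end G v s])
        (path_prob G rho tau v s * Num.max ((path_weight G v s)%:~R) 0)%:E
     - \esum_(s in [set s | first_visit_end G v s])
        (path_prob G rho tau v s * Num.max (- (path_weight G v s)%:~R) 0)%:E)%E
  else +oo%E.

Definition Val_m_rho (V : finType) (G : game V) (rho : V -> V -> RR) (v : V)
    : \bar RR :=
  ereal_sup [set exp_TP G rho tau v | tau in [set tau | ml_strategy G (VMax G) tau]].

Definition Val_m_bar (V : finType) (G : game V) (v : V) : \bar RR :=
  ereal_inf [set Val_m_rho G rho v | rho in [set rho | ml_strategy G (VMin G) rho]].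

Definition tildeE (V : finType) (G : game V) (rho : V -> V -> RR) (u u' : V) : Prop :=
  rho u u' != 0 /\
  forall u'', rho u u'' != 0 ->
    ((w G u u')%:~R%:E + Val_m_rho G rho u' <= (w G u u'')%:~R%:E + Val_m_rho G rho u'')%E.

Definition tilde_edge (V : finType) (G : game V) (rho : V -> V -> RR) (u u' : V) : Prop :=
  E G u u' /\ (u \in VMin G -> tildeE G rho u u').

Fixpoint tilde_path (V : finType) (G : game V) (rho : V -> V -> RR)
    (x : V) (s : seq V) : Prop :=
  if s is y :: s' then tilde_edge G rho x y /\ tilde_path G rho y s' else True.

(* Main.v *)
Require Import Defs.
From HB Require Import structures.
From mathcomp Require Import all_boot all_order all_algebra.
From mathcomp Require Import all_classical all_reals.
From mathcomp Require Import ereal topology normedtype sequences esum.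
From mathcomp Require Import Rstruct.
From mathcomp Require Import ring lra.
Import Order.TTheory GRing.Theory Num.Theory.
Local Open Scope classical_set_scope.
Local Open Scope ring_scope.
Set Implicit Arguments. Unset Strict Implicit. Unset Printing Implicit Defensive.

Section Basic.
Variables (V : finType) (G : game V) (HG : wf_game G).

Lemma inI0 (A B : {set V}) u : (A :&: B = finset.set0)%SET -> u \in A -> u \in B -> False.
Proof. by move=> H a b; have := congr1 (fun X : {set V} => u \in X) H; rewrite /= finset.in_setI a b finset.in_set0. Qed.

Lemma notT_MinMax u : u \notin Tgt G -> (u \in VMin G) || (u \in VMax G).
Proof.
case: HG => -[_ _ _ H] _ uT.
have := congr1 (fun X : {set V} => u \in X) H; rewrite /= !finset.in_setU finset.in_setT (negPf uT) orbF orbC => ->.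
by [].
Qed.

Lemma Max_notT u : u \in VMax G -> u \notin Tgt G.
Proof. case: HG => -[_ H _ _] _ uM; apply/negP => uT; exact: (inI0 H uM uT). Qed.

Lemma Min_notT u : u \in VMin G -> u \notin Tgt G.
Proof. case: HG => -[_ _ H _] _ uM; apply/negP => uT; exact: (inI0 H uM uT). Qed.

Lemma Min_notMax u : u \in VMin G -> u \notin VMax G.
Proof. case: HG => -[H _ _ _] _ uM; apply/negP => uT; exact: (inI0 H uT uM). Qed.

Lemma E_notT u u' : E G u u' -> u \notin Tgt G.
Proof. by case: HG => _ [H _]; apply: H. Qed.

Lemma succ_ex u : u \notin Tgt G -> exists u', E G u u'.
Proof. by case: HG => _ [_ H]; apply: H. Qed.

End Basic.
Section Lin.
Variables (V : finType) (Ts : {set V}) (Q : V -> V -> RR).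
Hypothesis inj : forall z : V -> RR, (forall t, t \in Ts -> z t = 0) ->
  (forall u, u \notin Ts -> z u = \sum_(b : V) Q u b * z b) -> forall u, z u = 0.

Let n := #|V|.
Let ev : 'I_n -> V := enum_val.
Let Bm : 'M[RR]_n := \matrix_(i, j) (if ev j \in Ts then 0 else Q (ev j) (ev i)).
Let Am : 'M[RR]_n := 1%:M - Bm.

Let mulA (v : 'rV[RR]_n) j :
  (v *m Am) 0 j = v 0 j - (if ev j \in Ts then 0 else \sum_(u : V) Q (ev j) u * v 0 (enum_rank u)).
Proof.
rewrite /Am mulmxBr mulmx1 !mxE; congr (_ - _).
case: ifP => jT.
  by rewrite big1 // => i _; rewrite mxE jT mulr0.
rewrite [RHS]big_enum_val /=; apply: eq_bigr => i _.
by rewrite mxE jT mulrC /ev enum_valK.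
Qed.

Let Aunit : Am \in unitmx.
Proof.
rewrite -row_free_unit; apply: inj_row_free => v vA.
pose z u := v 0 (enum_rank u).
have zv i : v 0 i = z (ev i) by rewrite /z /ev enum_valK.
have z0 : forall u, z u = 0.
  apply: inj => [t tT|u uT].
    have := congr1 (fun M : 'rV_n => M 0 (enum_rank t)) vA.
    by rewrite /= mulA /ev enum_rankK tT mxE subr0.
  have := congr1 (fun M : 'rV_n => M 0 (enum_rank u)) vA.
  rewrite /= mulA /ev enum_rankK (negPf uT) mxE => /eqP; rewrite subr_eq0 => /eqP.
  by rewrite /z.
apply/rowP => i; by rewrite mxE zv z0.
Qed.

Lemma lin_solve (b : V -> RR) : exists y : V -> RR,
  (forall t, t \in Ts -> y t = 0) /\
  (forall u, u \notin Ts -> y u = b u + \sum_(v : V) Q u v * y v).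
Proof.
pose bb : 'rV[RR]_n := \row_j (if ev j \in Ts then 0 else b (ev j)).
have [yv yA] : exists yv : 'rV_n, yv *m Am = bb.
  by exists (bb *m invmx Am); rewrite -mulmxA mulVmx // mulmx1.
exists (fun u => yv 0 (enum_rank u)); split.
  move=> t tT; have e : (yv *m Am) 0 (enum_rank t) = bb 0 (enum_rank t) by rewrite yA.
  by move: e; rewrite mulA mxE /ev enum_rankK tT subr0.
move=> u uT; have e : (yv *m Am) 0 (enum_rank u) = bb 0 (enum_rank u) by rewrite yA.
move: e; rewrite mulA mxE /ev enum_rankK (negPf uT) => <-.
by rewrite subrK.
Qed.
End Lin.
Section Chain.
Variables (V : finType) (G : game V) (HG : wf_game G).
Variables (rho : V -> V -> RR) (Hrho : ml_strategy G (VMin G) rho).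
Variables (tau : V -> V -> RR) (Htau : ml_strategy G (VMax G) tau).
Hypothesis HR : forall v, reach_prob G rho tau v = 1%E.

Local Notation P := (trans G rho tau).
Local Notation T := (Tgt G).

Lemma P_ge0 u u' : 0 <= P u u'.
Proof.
rewrite /trans; case: ifP => [uMin|_]; first by case: (Hrho uMin).
by case: ifP => // uMax; case: (Htau uMax).
Qed.

Lemma P_sum1 u : u \notin T -> \sum_(u' : V) P u u' = 1.
Proof.
move=> uT; have [uMin|uMin] := boolP (u \in VMin G).
  transitivity (\sum_(u' : V) rho u u'); first by apply: eq_bigr => u' _; rewrite /trans uMin.
  by case: (Hrho uMin).
have uMax : u \in VMax G by move: (notT_MinMax HG uT); rewrite (negPf uMin).
transitivity (\sum_(u' : V) tau u u'); first by apply: eq_bigr => u' _; rewrite /trans (negPf uMin) uMax.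
by case: (Htau uMax).
Qed.

Lemma prob_ge0 x s : 0 <= path_prob G rho tau x s.
Proof. elim: s x => [|y s IH] x /=; [exact: ler01| by rewrite mulr_ge0 // P_ge0]. Qed.

Lemma fve_nil u : first_visit_end G u [::] = (u \in T).
Proof. by rewrite /first_visit_end /= andbT. Qed.

Lemma fve_cons u u' s : first_visit_end G u (u' :: s) = (u \notin T) && first_visit_end G u' s.
Proof. by rewrite /first_visit_end /= andbCA. Qed.

Lemma minprin (z : V -> RR) :
  (forall t, t \in T -> 0 <= z t) ->
  (forall u, u \notin T -> \sum_(b : V) P u b * z b <= z u) ->
  forall u, 0 <= z u.
Proof.
move=> zT zsup u0; rewrite leNgt; apply/negP => hneg.
case: (@arg_minP _ _ V u0 predT z) => // a _ amin.
set m := z a.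
have mneg : m < 0 by apply: le_lt_trans (amin u0 isT) hneg.
have notT x : z x = m -> x \notin T.
  move=> zx; apply/negP => /zT; rewrite zx => h; move: mneg; rewrite ltNge h //.
have closed x b : z x = m -> P x b != 0 -> z b = m.
  move=> zx Pxb.
  have xT := notT x zx.
  have h1 : \sum_(b : V) P x b * (z b - m) = 0.
    apply/eqP; rewrite eq_le; apply/andP; split.
      under eq_bigr do rewrite mulrBr.
      rewrite sumrB -mulr_suml P_sum1 // mul1r subr_le0 -zx; exact: zsup.
    by apply: sumr_ge0 => i _; rewrite mulr_ge0 ?P_ge0 // subr_ge0 amin.
  have nn : forall i, predT i -> 0 <= P x i * (z i - m).
    by move=> i _; rewrite mulr_ge0 ?P_ge0 // subr_ge0 amin.
  have h3 : P x b * (z b - m) = 0 := psumr_eq0P nn h1 isT.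
  by move: h3 => /eqP; rewrite mulf_eq0 (negPf Pxb) /= subr_eq0 => /eqP.
have path0 s x : z x = m -> path_prob G rho tau x s != 0 -> z (last x s) = m.
  elim: s x => [|y s IH] x //= zx; rewrite mulf_eq0 negb_or => /andP[Pxy ps].
  by apply: IH => //; apply: closed Pxy.
have : reach_prob G rho tau a = 0%E.
  rewrite /reach_prob esum1 // => s /= fs.
  apply/eqP; rewrite eqe; apply/negPn/negP => ps.
  have := path0 s a erefl ps; move: fs; rewrite /first_visit_end => /andP[lT _] zl.
  by move: (notT _ zl); rewrite lT.
by rewrite HR => /eqP; rewrite eqe oner_eq0.
Qed.

Fixpoint pw (c : V -> V -> RR) (x : V) (s : seq V) : RR :=
  if s is y :: s' then c x y + pw c y s' else 0.

Definition Pth (Q : nat -> bool) (v : V) : set (seq V) :=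
  [set s | first_visit_end G v s && Q (size s)].

Local Notation prob := (path_prob G rho tau).

Definition GG c Q v := \esum_(s in Pth Q v) (prob v s * pw c v s)%:E.
Definition RP Q v := \esum_(s in Pth Q v) (prob v s)%:E.

Lemma pw_ge0 c : (forall a b, 0 <= c a b) -> forall x s, 0 <= pw c x s.
Proof. by move=> c0 x s; elim: s x => [|y s IH] x //=; rewrite addr_ge0. Qed.

Lemma Pth_T Q u s : u \in T -> Pth Q u s -> s = [::].
Proof. by move=> uT; case: s => // a s; rewrite /Pth /= fve_cons uT. Qed.

Lemma decomp (Q Q' : nat -> bool) (HQ : forall k, Q' k = Q k.+1) u
    (F : seq V -> \bar RR) (F0 : forall s, (0 <= F s)%E) :
  u \notin T -> \esum_(s in Pth Q u) F s = \sum_(u' : V) \esum_(s in Pth Q' u') F (u' :: s).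
Proof.
move=> uT.
transitivity (\esum_(s in Pth Q u) \sum_(u' : V) (if head u s == u' then F s else 0%E)).
  apply: eq_esum => s _; rewrite -big_mkcond /=.
  by rewrite (big_pred1 (head u s)) // => x; rewrite /= eq_sym.
rewrite esum_sum; last by move=> s u' _ _; case: ifP.
apply: eq_bigr => u' _.
transitivity (\esum_(s in Pth Q u `&` [set s | head u s = u']) F s).
  rewrite esum_mkcondr; apply: eq_esum => s _.
  by case: eqP => h; [rewrite mem_set | rewrite memNset].
rewrite -(esum_image _ (cons u')); last by move=> a b _ _ [].
congr esum; apply/seteqP; split.
  move=> [|a s] /= [H1 H2]; first by move: H1; rewrite /Pth /= fve_nil (negPf uT).
  subst a; exists s => //; rewrite /Pth /=.
  by move: H1; rewrite /Pth /= fve_cons HQ => /andP[/andP[_ ->] ->].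
move=> _ [s H <-]; split => //=.
by move: H; rewrite /Pth /= fve_cons uT HQ.
Qed.

Lemma esumZ (S : set (seq V)) (a : seq V -> \bar RR) (k : RR) :
  0 <= k -> (forall i, (0 <= a i)%E) ->
  \esum_(i in S) (k%:E * a i)%E = (k%:E * \esum_(i in S) a i)%E.
Proof.
move=> k0 a0; rewrite /esum -ereal_supZl //; last first.
  apply/set0P; exists 0%E; exists set0; first exact: fsets_set0.
  by rewrite fsbig_set0.
congr ereal_sup; apply/seteqP; split.
  move=> _ [A [finA AS] <-].
  exists (\sum_(i \in A) a i)%E; first by exists A.
  by rewrite !fsbig_finite // ge0_sume_distrr.
move=> _ [_ [A [finA AS] <-] <-].
exists A => //.
by rewrite !fsbig_finite // ge0_sume_distrr.
Qed.

Section Cost.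
Variable c : V -> V -> RR.
Hypothesis c0 : forall a b, 0 <= c a b.

Lemma GG_dec (Q Q' : nat -> bool) (HQ : forall k, Q' k = Q k.+1) u :
  u \notin T ->
  GG c Q u = (\sum_(u' : V) (P u u')%:E * ((c u u')%:E * RP Q' u' + GG c Q' u'))%E.
Proof.
move=> uT; rewrite /GG (decomp HQ) //; last first.
  by move=> s; rewrite lee_fin mulr_ge0 ?prob_ge0 ?pw_ge0.
apply: eq_bigr => u' _.
transitivity (\esum_(s in Pth Q' u') ((P u u')%:E *
   ((c u u')%:E * (prob u' s)%:E + (prob u' s * pw c u' s)%:E)))%E.
  apply: eq_esum => s _ /=.
  rewrite (_ : ((P u u')%:E * _ = (P u u' * (c u u' * prob u' s + prob u' s * pw c u' s))%:E)%E); last first.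
    by rewrite [RHS]EFinM [in RHS]EFinD [(c u u' * _)%:E]EFinM.
  congr EFin; ring.
rewrite esumZ ?P_ge0 //; last first.
  by move=> s; rewrite -EFinM -EFinD lee_fin addr_ge0 ?mulr_ge0 ?prob_ge0 ?pw_ge0.
rewrite esumD; last 2 first.
- by move=> s _; rewrite -EFinM lee_fin mulr_ge0 ?prob_ge0.
- by move=> s _; rewrite lee_fin mulr_ge0 ?prob_ge0 ?pw_ge0.
by rewrite esumZ // => s; rewrite lee_fin prob_ge0.
Qed.

Lemma GG_T Q u : u \in T -> GG c Q u = 0%E.
Proof. by move=> uT; rewrite /GG esum1 // => s /(Pth_T uT) ->; rewrite /= mulr0. Qed.

End Cost.

Lemma esum_sub (A B : set (seq V)) (a : seq V -> \bar RR) :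
  A `<=` B -> (forall i, (0 <= a i)%E) -> (\esum_(i in A) a i <= \esum_(i in B) a i)%E.
Proof.
move=> AB a0; rewrite {1}/esum; apply: ge_ereal_sup => _ [X [fX XA] <-].
by apply: esum_ge; exists X => //; split => //; apply: subset_trans XA AB.
Qed.

Lemma Pth_full v : Pth predT v = [set s | first_visit_end G v s].
Proof. by apply/seteqP; split => s; rewrite /Pth /= andbT. Qed.

Lemma RP_full u : RP predT u = 1%E.
Proof. by rewrite /RP Pth_full; apply: HR. Qed.

Lemma RP_le1 Q u : (RP Q u <= 1)%E.
Proof.
rewrite -(RP_full u); apply: esum_sub; last by move=> s; rewrite lee_fin prob_ge0.
by move=> s; rewrite /Pth /= => /andP[-> _].
Qed.

Section Cost2.
Variable c : V -> V -> RR.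
Hypothesis c0 : forall a b, 0 <= c a b.
Variable y : V -> RR.
Hypothesis y0 : forall u, 0 <= y u.
Hypothesis ysup : forall u, u \notin T -> \sum_(u' : V) P u u' * (c u u' + y u') <= y u.

Lemma GG_bound n u : (GG c (fun k => k <= n)%N u <= (y u)%:E)%E.
Proof.
elim: n u => [|n IH] u; have [uT|uT] := boolP (u \in T); try by rewrite GG_T // lee_fin y0.
  rewrite /GG esum1; first by rewrite lee_fin.
  move=> s; rewrite /Pth /= leqn0 size_eq0 => /andP[f /eqP e].
  by move: f; rewrite e fve_nil (negPf uT).
rewrite (@GG_dec _ c0 _ (fun k => k <= n)%N) //.
apply: (@le_trans _ _ (\sum_(u' : V) (P u u')%:E * ((c u u')%:E + (y u')%:E))%E).
  apply: lee_sum => u' _; apply: lee_wpmul2l; first by rewrite lee_fin P_ge0.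
  apply: leeD; last exact: IH.
  by rewrite -[leRHS]mule1; apply: lee_wpmul2l; [rewrite lee_fin c0 | apply: RP_le1].
under eq_bigr do rewrite -EFinD -EFinM.
by rewrite sumEFin lee_fin ysup.
Qed.

Lemma GG_full_bound u : (GG c predT u <= (y u)%:E)%E.
Proof.
rewrite {1}/GG {1}/esum; apply: ge_ereal_sup => _ [X [fX XS] <-].
pose n := (\max_(s <- finmap.enum_fset (fset_set X)) size s)%N.
apply: le_trans (GG_bound n u).
apply: esum_ge; exists X => //; split => // s Xs.
have := XS s Xs; rewrite /Pth /= andbT => ->.
apply: (@leq_bigmax_seq _ _ predT size s) => //.
by rewrite in_fset_set // inE.
Qed.

End Cost2.

Lemma harm0 (z : V -> RR) : (forall t, t \in T -> z t = 0) ->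
  (forall u, u \notin T -> z u = \sum_(b : V) P u b * z b) -> forall u, z u = 0.
Proof.
move=> zT zeq u; apply/eqP; rewrite eq_le; apply/andP; split.
  rewrite -oppr_ge0; move: u; apply: minprin => [t tT|u uT]; first by rewrite zT ?oppr0.
  by rewrite zeq // -sumrN; under eq_bigr do rewrite mulrN.
by move: u; apply: minprin => [t tT|u uT]; [rewrite zT | rewrite zeq].
Qed.

Lemma GG_fin c : (forall a b, 0 <= c a b) -> exists g : V -> RR,
  [/\ (forall t, t \in T -> g t = 0),
      (forall u, u \notin T -> g u = \sum_(v : V) P u v * (c u v + g v)) &
      (forall u, GG c predT u = (g u)%:E)].
Proof.
move=> c0.
have [y [yT yeq]] := @lin_solve V T P harm0 (fun u => \sum_(v : V) P u v * c u v).
have y0 : forall u, 0 <= y u.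
  apply: minprin => [t tT|u uT]; first by rewrite yT.
  by rewrite [leRHS]yeq // lerDr sumr_ge0 // => v _; rewrite mulr_ge0 ?P_ge0.
have ysup : forall u, u \notin T -> \sum_(u' : V) P u u' * (c u u' + y u') <= y u.
  move=> u uT; under eq_bigr do rewrite mulrDr.
  by rewrite big_split /= -yeq.
have Gb := GG_full_bound c0 y0 ysup.
have fin u : GG c predT u \is a fin_num.
  rewrite ge0_fin_numE; last by apply: esum_ge0 => s _; rewrite lee_fin mulr_ge0 ?prob_ge0 ?pw_ge0.
  exact: le_lt_trans (Gb u) (ltry _).
exists (fun u => fine (GG c predT u)); split.
- by move=> t tT; rewrite GG_T.
- move=> u uT; apply: EFin_inj; rewrite (fineK (fin u)) (@GG_dec _ c0 predT predT) //.
  rewrite -sumEFin; apply: eq_bigr => v _.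
  by rewrite RP_full mule1 EFinM EFinD fineK.
- by move=> u; rewrite fineK.
Qed.

Lemma maxNE (x : RR) : Num.max x 0 = Num.max (- x) 0 + x.
Proof.
have [h|h] := leP 0 x.
  by rewrite max_r ?add0r // oppr_le0.
by rewrite max_l ?addNr // oppr_ge0 ltW.
Qed.

Lemma expTP_eq : exists x : V -> RR,
  [/\ (forall t, t \in T -> x t = 0),
      (forall u, u \notin T -> x u = \sum_(v : V) P u v * ((w G u v)%:~R + x v)) &
      (forall v, exp_TP G rho tau v = (x v)%:E)].
Proof.
pose K : RR := \sum_(a : V) \sum_(b : V) `|(w G a b)%:~R : RR|.
have wK a b : `|(w G a b)%:~R : RR| <= K.
  rewrite /K (bigD1 a) //= (bigD1 b) //= -addrA lerDl.
  by rewrite addr_ge0 ?sumr_ge0 // => i _; rewrite sumr_ge0.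
pose c1 a b : RR := (w G a b)%:~R + K.
pose c2 (a b : V) : RR := K.
have c10 a b : 0 <= c1 a b.
  by have := wK a b; rewrite /c1 ler_norml => /andP[h _]; lra.
have c20 a b : 0 <= c2 a b by rewrite /c2 (le_trans _ (wK a a)).
have [g1 [g1T g1e g1G]] := GG_fin c10.
have [g2 [g2T g2e g2G]] := GG_fin c20.
have pwE v s : pw c1 v s - pw c2 v s = (path_weight G v s)%:~R.
  elim: s v => [|y s IH] v /=; first by rewrite subrr.
  by rewrite intrD -IH /c1 /c2; ring.
exists (fun u => g1 u - g2 u); split.
- by move=> t tT; rewrite g1T ?g2T ?subr0.
- move=> u uT; rewrite g1e // g2e // -sumrB; apply: eq_bigr => v _.
  rewrite /c1 /c2; ring.
move=> v; rewrite /exp_TP HR eqxx.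
set E1 := esum _ _; set E2 := esum _ _.
have G1 := g1G v; have G2 := g2G v; rewrite /GG Pth_full in G1 G2.
have E10 : (0 <= E1)%E by apply: esum_ge0 => s _; rewrite lee_fin mulr_ge0 ?prob_ge0 ?le_max ?lexx ?orbT.
have E20 : (0 <= E2)%E by apply: esum_ge0 => s _; rewrite lee_fin mulr_ge0 ?prob_ge0 ?le_max ?lexx ?orbT.
have E1le : (E1 <= (g1 v)%:E)%E.
  rewrite -G1; apply: le_esum => s _; rewrite lee_fin ler_wpM2l ?prob_ge0 // ge_max.
  rewrite pw_ge0 // andbT -pwE lerBlDr lerDl pw_ge0 //.
have E2le : (E2 <= (g2 v)%:E)%E.
  rewrite -G2; apply: le_esum => s _; rewrite lee_fin ler_wpM2l ?prob_ge0 // ge_max.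
  rewrite pw_ge0 // andbT -pwE opprB lerBlDr lerDl pw_ge0 //.
have f1 : E1 \is a fin_num by rewrite ge0_fin_numE // (le_lt_trans E1le) ?ltry.
have f2 : E2 \is a fin_num by rewrite ge0_fin_numE // (le_lt_trans E2le) ?ltry.
have e12 : (E1 + (g2 v)%:E = (g1 v)%:E + E2)%E.
  rewrite -G1 -G2 -!esumD; last 4 first.
  - by move=> s _; rewrite lee_fin mulr_ge0 ?prob_ge0 ?pw_ge0.
  - by move=> s _; rewrite lee_fin mulr_ge0 ?prob_ge0 ?le_max ?lexx ?orbT.
  - by move=> s _; rewrite lee_fin mulr_ge0 ?prob_ge0 ?le_max ?lexx ?orbT.
  - by move=> s _; rewrite lee_fin mulr_ge0 ?prob_ge0 ?pw_ge0.
  apply: eq_esum => s _; rewrite -!EFinD; congr EFin.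
  rewrite -pwE maxNE opprB; ring.
have e3 : fine E1 + g2 v = g1 v + fine E2.
  by apply: EFin_inj; rewrite !EFinD !fineK.
rewrite -(fineK f1) -(fineK f2) -EFinN -EFinD; congr EFin; lra.
Qed.

End Chain.

Lemma sum_dirac (V : finType) (a : V) (F : V -> RR) :
  \sum_(v : V) (v == a)%:R * F v = F a.
Proof.
rewrite (bigD1 a) //= eqxx mul1r big1 ?addr0 // => i /negPf ->; by rewrite mul0r.
Qed.

Section Final.
Variables (V : finType) (G : game V) (HG : wf_game G).
Variables (rho : V -> V -> RR) (Hrho : ml_strategy G (VMin G) rho).
Hypothesis Hreach : forall v tau, ml_strategy G (VMax G) tau ->
                reach_prob G rho tau v = 1%E.
Local Notation T := (Tgt G).

Definition J tau v := fine (exp_TP G rho tau v).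

Lemma J_prop tau : ml_strategy G (VMax G) tau ->
  [/\ (forall t, t \in T -> J tau t = 0),
      (forall u, u \notin T -> J tau u = \sum_(v : V) trans G rho tau u v * ((w G u v)%:~R + J tau v)) &
      (forall v, exp_TP G rho tau v = (J tau v)%:E)].
Proof.
move=> Htau; have [x [xT xe xE]] := expTP_eq HG Hrho Htau (fun v => Hreach v Htau).
have Jx v : J tau v = x v by rewrite /J xE.
split => [t tT|u uT|v]; rewrite ?Jx; first exact: xT.
  by rewrite xe //; apply: eq_bigr => b _; rewrite Jx.
by rewrite xE.
Qed.

Definition tauD (s : {ffun V -> V}) (u u' : V) : RR := (u' == s u)%:R.
Definition valid (s : {ffun V -> V}) := [forall u, (u \in VMax G) ==> E G u (s u)].

Lemma tauD_ml s : valid s -> ml_strategy G (VMax G) (tauD s).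
Proof.
move=> vs u uM; split.
- by move=> u'; rewrite /tauD ler0n.
- rewrite (bigD1 (s u)) //= /tauD eqxx big1 ?addr0 // => i /negPf ->; by [].
- move=> u'; rewrite /tauD; have [-> _|h] := eqVneq u' (s u); last by rewrite eqxx.
  by move/forallP: vs => /(_ u) /implyP; apply.
Qed.

Definition s0 : {ffun V -> V} :=
  [ffun u => if [pick u' | E G u u'] is Some u' then u' else u].

Lemma valid_s0 : valid s0.
Proof.
apply/forallP => u; apply/implyP => uM; rewrite ffunE; case: pickP => // h.
have [u' e] := succ_ex HG (Max_notT HG uM).
by have := h u'; rewrite e.
Qed.

Definition Jd s := J (tauD s).

Definition ss : {ffun V -> V} := Order.arg_max s0 valid (fun s => \sum_(v : V) Jd s v).

Lemma ss_spec : valid ss /\ forall s, valid s -> \sum_(v : V) Jd s v <= \sum_(v : V) Jd ss v.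
Proof.
rewrite /ss; case: (@arg_maxP _ _ _ s0 valid (fun s => \sum_(v : V) Jd s v) valid_s0).
by move=> s vs smax; split.
Qed.

Lemma trans_Max s u b : u \in VMax G -> trans G rho (tauD s) u b = (b == s u)%:R.
Proof.
move=> uM; rewrite /trans uM.
by case: ifP => // uMin; move: (Min_notMax HG uMin); rewrite uM.
Qed.

Lemma opt u u' : u \in VMax G -> E G u u' -> (w G u u')%:~R + Jd ss u' <= Jd ss u.
Proof.
move=> uM e; rewrite leNgt; apply/negP => hlt.
have [vs smax] := ss_spec.
pose s' : {ffun V -> V} := [ffun x => if x == u then u' else ss x].
have vs' : valid s'.
  apply/forallP => x; apply/implyP => xM; rewrite ffunE.
  case: eqP => [->//|_]; by move/forallP: vs => /(_ x) /implyP; apply.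
have [JT Je _] := J_prop (tauD_ml vs).
have [JT' Je' _] := J_prop (tauD_ml vs').
pose z v := Jd s' v - Jd ss v.
have same a b : a != u -> trans G rho (tauD s') a b = trans G rho (tauD ss) a b.
  by move=> au; rewrite /trans /tauD ffunE (negPf au).
have Ju : Jd s' u = (w G u u')%:~R + Jd s' u'.
  rewrite /Jd Je' ?(Max_notT HG uM) //.
  under eq_bigr do rewrite trans_Max // ffunE eqxx.
  by rewrite sum_dirac.
have z0 : forall v, 0 <= z v.
  apply: (minprin HG Hrho (tauD_ml vs') (fun v => Hreach v (tauD_ml vs'))).
    by move=> t tT; rewrite /z /Jd JT ?JT' ?subr0.
  move=> a aT; have [->|au] := eqVneq a u.
    under eq_bigr do rewrite trans_Max // ffunE eqxx.
    rewrite sum_dirac /z Ju; lra.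
  rewrite /z /Jd (Je' a aT) (Je a aT) -sumrB le_eqVlt; apply/orP; left; apply/eqP.
  apply: eq_bigr => b _; rewrite same //; ring.
have zu : 0 < z u by have := z0 u'; rewrite /z Ju; lra.
have := smax s' vs'; rewrite leNgt => /negP; apply.
rewrite -subr_gt0 -sumrB (bigD1 u) //=.
apply: lt_le_trans (_ : z u <= _); first exact: zu.
rewrite /z lerDl; apply: sumr_ge0 => i _; exact: z0.
Qed.

Lemma dom tau : ml_strategy G (VMax G) tau -> forall v, J tau v <= Jd ss v.
Proof.
move=> Htau v; rewrite -subr_ge0; move: v.
have [vs _] := ss_spec.
have [JT Je _] := J_prop (tauD_ml vs).
have [JT' Je' _] := J_prop Htau.
apply: (minprin HG Hrho Htau (fun v => Hreach v Htau)).
  by move=> t tT; rewrite /Jd JT ?JT' ?subr0.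
move=> a aT.
have key : \sum_(b : V) trans G rho tau a b * ((w G a b)%:~R + Jd ss b) <= Jd ss a.
  have [aMin|aMin] := boolP (a \in VMin G).
    rewrite [leRHS]/Jd Je // le_eqVlt; apply/orP; left; apply/eqP.
    by apply: eq_bigr => b _; rewrite /trans aMin.
  have aM : a \in VMax G by move: (notT_MinMax HG aT); rewrite (negPf aMin).
  apply: (@le_trans _ _ (\sum_(b : V) tau a b * Jd ss a)).
    apply: ler_sum => b _; rewrite /trans (negPf aMin) aM.
    have [->|t0] := eqVneq (tau a b) 0; first by rewrite !mul0r.
    apply: ler_wpM2l; first by case: (Htau a aM).
    apply: opt => //; by case: (Htau a aM) => _ _; apply.
  rewrite -mulr_suml; case: (Htau a aM) => _ -> _; by rewrite mul1r.
rewrite [X in _ <= _ - X](Je' a aT).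
rewrite (_ : \sum_(b : V) _ * (Jd ss b - J tau b) = \sum_(b : V) trans G rho tau a b * ((w G a b)%:~R + Jd ss b)
   - \sum_(b : V) trans G rho tau a b * ((w G a b)%:~R + J tau b)); last first.
  by rewrite -sumrB; apply: eq_bigr => b _; ring.
move: key; set A := \sum_(b : V) _; set B := \sum_(b : V) _; lra.
Qed.

Lemma Val_eq v : Val_m_rho G rho v = (Jd ss v)%:E.
Proof.
have [vs _] := ss_spec.
rewrite /Val_m_rho; apply/eqP; rewrite eq_le; apply/andP; split.
  apply: ge_ereal_sup => _ [tau Htau <-].
  by have [_ _ ->] := J_prop Htau; rewrite lee_fin dom.
apply: ereal_sup_ubound; exists (tauD ss); first exact: tauD_ml.
by have [_ _ ->] := J_prop (tauD_ml vs).
Qed.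

Lemma edge_ineq u u' : tilde_edge G rho u u' -> (w G u u')%:~R + Jd ss u' <= Jd ss u.
Proof.
move=> [e ht]; have uT := E_notT HG e.
have [vs _] := ss_spec.
have [aMin|aMin] := boolP (u \in VMin G); last first.
  have uM : u \in VMax G by move: (notT_MinMax HG uT); rewrite (negPf aMin).
  exact: opt.
have [rnz hmin] := ht aMin.
have [JT Je _] := J_prop (tauD_ml vs).
rewrite [leRHS]/Jd Je //.
apply: (@le_trans _ _ (\sum_(b : V) rho u b * ((w G u u')%:~R + Jd ss u'))).
  by rewrite -mulr_suml; case: (Hrho aMin) => _ -> _; rewrite mul1r.
apply: ler_sum => b _; rewrite /trans aMin.
have [->|t0] := eqVneq (rho u b) 0; first by rewrite !mul0r.
apply: ler_wpM2l; first by case: (Hrho aMin).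
by have := hmin b t0; rewrite !Val_eq -!EFinD lee_fin.
Qed.

Lemma path_ineq v s : tilde_path G rho v s ->
  (path_weight G v s)%:~R + Jd ss (last v s) <= Jd ss v.
Proof.
elim: s v => [|y s IH] v /=; first by rewrite add0r.
case=> ed tp; have := IH y tp; have := edge_ineq ed; rewrite intrD; lra.
Qed.

Lemma final_main :
  (forall v s, tilde_path G rho v s -> first_visit_end G v s ->
     ((path_weight G v s)%:~R%:E <= Val_m_rho G rho v)%E) /\
  (forall v s, s != [::] -> last v s = v -> tilde_path G rho v s ->
     path_weight G v s <= 0).
Proof.
have [vs _] := ss_spec.
have [JT _ _] := J_prop (tauD_ml vs).
split.
  move=> v s tp /andP[lT _]; rewrite Val_eq lee_fin.
  by have := path_ineq tp; rewrite /Jd JT //; lra.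
move=> v s _ lv tp; have := path_ineq tp; rewrite lv => h.
by rewrite -(lerz0 RR); lra.
Qed.

End Final.

Unset Implicit Arguments.

Theorem lemma19 (V : finType) (G : game V) (HG : wf_game G)
    (Hd : forall v, Val_d G v != +oo%E)
    (Hm : forall v, Val_m_bar G v != +oo%E)
    (rho : V -> V -> RR) (Hrho : ml_strategy G (VMin G) rho)
    (Hreach : forall v tau, ml_strategy G (VMax G) tau ->
                reach_prob G rho tau v = 1%E) :
  (forall v s, tilde_path G rho v s -> first_visit_end G v s ->
     ((path_weight G v s)%:~R%:E <= Val_m_rho G rho v)%E) /\
  (forall v s, s != [::] -> last v s = v -> tilde_path G rho v s ->
     path_weight G v s <= 0).
Proof. exact: (final_main HG Hrho Hreach). Qed.
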